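(* For all $d,k,N\in\mathbb{N}$, all $\mathbf{x}\in\mathcal{G}_{d,k}$ and all $u\in\mathbb{N}^N$ with $u_1+\dots+u_N\in N\mathbb{Z}$, $$\mathsf{bary}(\mathbf{x}^{u_1},\dots,\mathbf{x}^{u_N})=\mathbf{x}^{(u_1+\dots+u_N)/N}.$$
   Context: $T_{d,k}=\bigoplus_{\ell=0}^k(\mathbb{R}^d)^{\otimes\ell}$ is the truncated tensor algebra with product the bilinear extension of the tensor product of levels, set to $0$ when the total level exceeds $k$. $\mathfrak{g}_{d,k}$ is the smallest Lie subalgebra (commutator bracket) of $T_{d,k}$ containing $e_1,\dots,e_d\in\mathbb{R}^d$; $\exp(\mathbf{z})=\sum_{\ell=0}^k\mathbf{z}^{\otimes\ell}/\ell!$; $\mathcal{G}_{d,k}=\exp(\mathfrak{g}_{d,k})$, a group under the product of $T_{d,k}$ (powers $\mathbf{x}^n$ are group powers), with $\log=\exp^{-1}$, $\log(\mathbf{s})=\sum_{\ell\ge1}\frac{(-1)^{\ell+1}}{\ell}(\mathbf{s}-1)^{\otimes\ell}$. For $\mathbf{x}\in\mathcal{G}_{d,k}^N$, $\mathsf{bary}(\mathbf{x})$ is the unique $\mathbf{m}\in\mathcal{G}_{d,k}$ with $\sum_{i=1}^N\log(\mathbf{m}^{-1}\mathbf{x}_i)=0$. *)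

(* Defs.v *)
(* A tensor is represented by its coefficient function on words over the
   alphabet 'I_d (basis e_{w_1} (x) ... (x) e_{w_n} of level n = size w).
   Elements of T_{d,k} are those vanishing on words of length > k; all
   operations below preserve this (the product truncates at level k). *)
From HB Require Import structures.
From mathcomp Require Import all_boot all_order all_algebra.
From mathcomp Require Import reals.
From Stdlib Require Import ClassicalEpsilon.
Set Implicit Arguments. Unset Strict Implicit. Unset Printing Implicit Defensive.
Import Order.TTheory GRing.Theory Num.Theory.
Local Open Scope ring_scope.

Section TruncTensor.
Variables (R : realType) (d k : nat).

Definition tens := seq 'I_d -> R.

Definition tzero : tens := fun _ => 0.
Definition tone : tens := fun w => if w == [::] then 1 else 0.
Definition tadd (a b : tens) : tens := fun w => a w + b w.
Definition topp (a : tens) : tens := fun w => - a w.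
Definition tsub (a b : tens) : tens := fun w => a w - b w.
Definition tscale (c : R) (a : tens) : tens := fun w => c * a w.

Definition tmul (a b : tens) : tens := fun w =>
  if (size w <= k)%N then \sum_(i < (size w).+1) a (take i w) * b (drop i w)
  else 0.

Definition tpow (a : tens) (n : nat) : tens := iter n (tmul a) tone.

Definition texp (z : tens) : tens := fun w =>
  \sum_(l < k.+1) tpow z l w / (l`!)%:R.

Definition tlog (s : tens) : tens := fun w =>
  \sum_(l < k.+1 | (0 < l)%N)
     ((-1) ^+ l.+1 / (l%:R)) * tpow (tsub s tone) l w.

(* inverse of an element with constant term 1 (in particular of group
   elements): m^{-1} = sum_{l=0}^k (1 - m)^l *)
Definition tinv (m : tens) : tens := fun w =>
  \sum_(l < k.+1) tpow (tsub tone m) l w.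

Definition tbracket (a b : tens) : tens := tsub (tmul a b) (tmul b a).

Definition tgen (i : 'I_d) : tens :=
  fun w => if (0 < k)%N && (w == [:: i]) then 1 else 0.

Inductive in_lie : tens -> Prop :=
| lie_gen i : in_lie (tgen i)
| lie_zero : in_lie tzero
| lie_add a b : in_lie a -> in_lie b -> in_lie (tadd a b)
| lie_scale c a : in_lie a -> in_lie (tscale c a)
| lie_bracket a b : in_lie a -> in_lie b -> in_lie (tbracket a b).

Definition in_group (x : tens) : Prop := exists z, in_lie z /\ x = texp z.

Definition is_bary (N : nat) (xs : 'I_N -> tens) (m : tens) : Prop :=
  in_group m /\ (fun w => \sum_(i < N) tlog (tmul (tinv m) (xs i)) w) = tzero.

Definition bary (N : nat) (xs : 'I_N -> tens) : tens :=
  epsilon (inhabits tzero) (fun m => is_bary xs m /\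
                              forall m', is_bary xs m' -> m' = m).

End TruncTensor.

(* Main.v *)
Require Import Defs.
From mathcomp Require Import all_boot all_order all_algebra.
From mathcomp Require Import reals.
From mathcomp Require Import zify ring lra.
From Stdlib Require Import ClassicalEpsilon FunctionalExtensionality.
Set Implicit Arguments. Unset Strict Implicit. Unset Printing Implicit Defensive.
Import Order.TTheory GRing.Theory Num.Theory.
Local Open Scope ring_scope.

Section T.
Variables (R : realType) (d k : nat).
Local Notation tens := (tens R d).
Implicit Types (a b c : tens) (w : seq 'I_d).

Lemma tmul_nil a b : tmul k a b [::] = a [::] * b [::].
Proof. by rewrite /tmul /= big_ord1 ?take0 ?drop0. Qed.

Definition tr a := forall w, (k < size w)%N -> a w = 0.

Lemma tr_tmul a b : tr (tmul k a b).
Proof. by move=> w hw; rewrite /tmul leqNgt hw. Qed.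

Lemma tr_tone : tr (@tone R d).
Proof. by move=> [|x w] //= _; rewrite /tone. Qed.

Lemma tr_tpow a n : tr (tpow k a n).
Proof. case: n => [|n] /=; [exact: tr_tone | exact: tr_tmul]. Qed.

Lemma tpow_nil a n : tpow k a n [::] = a [::] ^+ n.
Proof. elim: n => [|n IH] /=; first by rewrite /tone eqxx expr0.
by rewrite tmul_nil IH exprS. Qed.

Lemma tpowS a n : tpow k a n.+1 = tmul k a (tpow k a n).
Proof. by []. Qed.

Lemma tmulA a b c : tmul k a (tmul k b c) = tmul k (tmul k a b) c.
Proof.
apply: functional_extensionality => w; rewrite /tmul.
case: leqP => hw //.
set n := size w.
pose G (j i : nat) := a (take j w) * b (take (i - j) (drop j w)) * c (drop i w).
transitivity (\sum_(j < n.+1) \sum_(i < n.+1 | (j <= i)%N) G j i).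
  apply: eq_bigr => j _.
  have hj : (j <= n)%N by rewrite -ltnS.
  rewrite size_drop ifT; last by lia.
  rewrite mulr_sumr.
  transitivity (\sum_(j <= i < n.+1) G j i); last first.
    by rewrite big_geq_mkord.
  have := big_addn 0 n.+1 j xpredT (G j); rewrite add0n => ->.
  rewrite subSn // big_mkord; apply: eq_bigr => i _.
  by rewrite /G mulrA drop_drop addnK.
transitivity (\sum_(i < n.+1) \sum_(j < n.+1 | (j <= i)%N) G j i).
  under eq_bigr do rewrite big_mkcond.
  under [RHS]eq_bigr do rewrite big_mkcond.
  exact: exchange_big.
apply: eq_bigr => i _.
have hi : (i <= n)%N by rewrite -ltnS.
rewrite size_takel // ifT; last by lia.
rewrite mulr_suml.
rewrite [RHS](big_ord_widen n.+1 (fun j => a (take j (take i w)) * b (drop j (take i w)) * c (drop i w))) //.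
apply: eq_big => [j|j]; first by rewrite ltnS.
move=> hji.
by rewrite /G take_takel // take_drop subnK.
Qed.

Lemma tmul1r a : tr a -> tmul k a (@tone R d) = a.
Proof.
move=> ha; apply: functional_extensionality => w; rewrite /tmul.
case: leqP => hw; last by rewrite ha.
rewrite big_ord_recr /= take_size drop_size /tone eqxx mulr1 big1 ?add0r //.
move=> i _; rewrite ifN ?mulr0 //.
by rewrite -size_eq0 size_drop /= subn_eq0 -ltnNge.
Qed.

Lemma tmul1l a : tr a -> tmul k (@tone R d) a = a.
Proof.
move=> ha; apply: functional_extensionality => w; rewrite /tmul.
case: leqP => hw; last by rewrite ha.
rewrite big_ord_recl /= take0 drop0 /tone eqxx mul1r big1 ?addr0 //.
move=> i _; rewrite ifN ?mul0r //.
rewrite -size_eq0 size_take; case: ifP => // _; rewrite -lt0n; exact: (leq_ltn_trans _ (ltn_ord i)).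
Qed.

Lemma tmul_suml (I : finType) (P : pred I) (F : I -> tens) b :
  tmul k (fun w => \sum_(i | P i) F i w) b = fun w => \sum_(i | P i) tmul k (F i) b w.
Proof.
apply: functional_extensionality => w; rewrite /tmul; case: ifP => _.
  rewrite exchange_big; apply: eq_bigr => j _; exact: mulr_suml.
by rewrite big1.
Qed.

Lemma tmul_sumr (I : finType) (P : pred I) (F : I -> tens) a :
  tmul k a (fun w => \sum_(i | P i) F i w) = fun w => \sum_(i | P i) tmul k a (F i) w.
Proof.
apply: functional_extensionality => w; rewrite /tmul; case: ifP => _.
  rewrite exchange_big; apply: eq_bigr => j _; exact: mulr_sumr.
by rewrite big1.
Qed.

Lemma tmulZl (c : R) a b : tmul k (fun w => c * a w) b = fun w => c * tmul k a b w.
Proof.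
apply: functional_extensionality => w; rewrite /tmul; case: ifP => _; last by rewrite mulr0.
rewrite mulr_sumr; apply: eq_bigr => j _; by rewrite mulrA.
Qed.

Lemma tmulZr (c : R) a b : tmul k a (fun w => c * b w) = fun w => c * tmul k a b w.
Proof.
apply: functional_extensionality => w; rewrite /tmul; case: ifP => _; last by rewrite mulr0.
rewrite mulr_sumr; apply: eq_bigr => j _; by rewrite mulrCA.
Qed.

Lemma tmulDl a b c : tmul k (fun w => a w + b w) c = fun w => tmul k a c w + tmul k b c w.
Proof.
apply: functional_extensionality => w; rewrite /tmul; case: ifP => _; last by rewrite addr0.
rewrite -big_split; apply: eq_bigr => j _; by rewrite mulrDl.
Qed.

Lemma tmulDr a b c : tmul k a (fun w => b w + c w) = fun w => tmul k a b w + tmul k a c w.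
Proof.
apply: functional_extensionality => w; rewrite /tmul; case: ifP => _; last by rewrite addr0.
rewrite -big_split; apply: eq_bigr => j _; by rewrite mulrDr.
Qed.

Lemma tmul0l b : tmul k (fun _ => 0) b = fun _ => 0.
Proof.
apply: functional_extensionality => w; rewrite /tmul; case: ifP => _ //.
by rewrite big1 // => j _; rewrite mul0r.
Qed.

Lemma tpow_small a i w : a [::] = 0 -> (size w < i)%N -> tpow k a i w = 0.
Proof.
move=> a0; elim: i w => [//|i IH] w hw; rewrite tpowS /tmul; case: ifP => _ //.
rewrite big1 // => j _; case: (posnP j) => [->|hj]; first by rewrite take0 a0 mul0r.
rewrite IH ?mulr0 // size_drop; have := ltn_ord j; lia.
Qed.

Lemma tpow_big a i : a [::] = 0 -> (k < i)%N -> tpow k a i = fun _ => 0.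
Proof.
move=> a0 hi; apply: functional_extensionality => w.
case: (ltnP (size w) i) => hw; first exact: tpow_small.
apply: tr_tpow; lia.
Qed.

Lemma lie_props z : in_lie k z -> z [::] = 0 /\ tr z.
Proof.
elim => [i| |a' b' _ [h1 h2] _ [h3 h4]|c a' _ [h1 h2]|a' b' _ _ _ _].
- split; first by rewrite /tgen andbF.
  move=> w hw; rewrite /tgen; case: andP => // [[h /eqP hw']]; move: hw; rewrite hw' /=; lia.
- by [].
- by split; [rewrite /tadd h1 h3 addr0 | move=> w hw; rewrite /tadd h2 // h4 // addr0].
- by split; [rewrite /tscale h1 mulr0 | move=> w hw; rewrite /tscale h2 // mulr0].
- split; first by rewrite /tbracket /tsub !tmul_nil mulrC subrr.
  by move=> w hw; rewrite /tbracket /tsub !tr_tmul // subrr.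
Qed.

Section Ev.
Variable z : tens.
Hypotheses (z0 : z [::] = 0) (trz : tr z).
Implicit Types p q : {poly R}.

Definition ev (p : {poly R}) : tens := fun w => \sum_(i < k.+1) p`_i * tpow k z i w.

Lemma ev_eq p q : (forall i, (i < k.+1)%N -> p`_i = q`_i) -> ev p = ev q.
Proof.
move=> h; apply: functional_extensionality => w; apply: eq_bigr => i _.
by rewrite h.
Qed.

Lemma ev_tr p : tr (ev p).
Proof. move=> w hw; rewrite /ev big1 // => i _; by rewrite tr_tpow // mulr0. Qed.

Lemma evD p q : ev (p + q) = fun w => ev p w + ev q w.
Proof.
apply: functional_extensionality => w; rewrite /ev -big_split; apply: eq_bigr => i _.
by rewrite coefD mulrDl.
Qed.

Lemma evB p q : ev (p - q) = fun w => ev p w - ev q w.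
Proof.
apply: functional_extensionality => w; rewrite /ev -sumrB; apply: eq_bigr => i _.
by rewrite coefB mulrBl.
Qed.

Lemma evZ (c : R) p : ev (c *: p) = fun w => c * ev p w.
Proof.
apply: functional_extensionality => w; rewrite /ev mulr_sumr; apply: eq_bigr => i _.
by rewrite coefZ mulrA.
Qed.

Lemma ev0 : ev 0 = fun _ => 0.
Proof.
apply: functional_extensionality => w; rewrite /ev big1 // => i _.
by rewrite coef0 mul0r.
Qed.

Lemma ev_sum (I : finType) (P : pred I) (F : I -> {poly R}) :
  ev (\sum_(i | P i) F i) = fun w => \sum_(i | P i) ev (F i) w.
Proof.
apply: functional_extensionality => w; rewrite /ev exchange_big; apply: eq_bigr => i _.
by rewrite coef_sum mulr_suml.
Qed.

Lemma ev1 : ev 1 = @tone R d.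
Proof.
apply: functional_extensionality => w; rewrite /ev big_ord_recl /= coef1 eqxx mul1r.
by rewrite big1 ?addr0 // => i _; rewrite coef1 /= mul0r.
Qed.

Lemma z_k0 : k = 0%N -> z = fun _ => 0.
Proof.
move=> hk; apply: functional_extensionality => -[|x w] //; apply: trz; by rewrite hk.
Qed.

Lemma evX : ev 'X = z.
Proof.
case: (posnP k) => hk.
  rewrite (z_k0 hk); apply: functional_extensionality => w.
  rewrite /ev big1 // => i _; rewrite coefX.
  have -> : nat_of_ord i = 0%N by have := ltn_ord i; lia.
  by rewrite mul0r.
apply: functional_extensionality => w; rewrite /ev.
have hk' : (1 < k.+1)%N by [].
rewrite (bigD1 (Ordinal hk')) //= coefX eqxx mul1r big1 ?addr0.
  by rewrite tmul1r.
move=> i hi; rewrite coefX.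
have /negbTE -> : (nat_of_ord i != 1%N).
  by apply: contra hi => /eqP hi; apply/eqP/val_inj.
by rewrite mul0r.
Qed.

Lemma ev_mulX q : ev ('X * q) = tmul k z (ev q).
Proof.
apply: functional_extensionality => w; rewrite /ev tmul_sumr.
under [RHS]eq_bigr => i _ do rewrite tmulZr /=.
rewrite big_ord_recl big_ord_recr /= coefXM eqxx mul0r add0r.
rewrite -tpowS (tpow_big z0 (ltnSn k)) mulr0 addr0.
by apply: eq_bigr => i _; rewrite coefXM add0n.
Qed.

Lemma ev_mul p q : ev (p * q) = tmul k (ev p) (ev q).
Proof.
elim/poly_ind: p q => [|p c IH] q; first by rewrite mul0r ev0 tmul0l.
rewrite mulrDl -mulrA evD IH mul_polyC evZ ev_mulX.
rewrite evD IH evX -[c%:P]mulr1 mul_polyC evZ ev1 tmulDl tmulZl tmul1l.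
by rewrite tmulA.
exact: ev_tr.
Qed.

Lemma ev_pow p n : tpow k (ev p) n = ev (p ^+ n).
Proof.
elim: n => [|n IH]; first by rewrite expr0 ev1.
by rewrite tpowS IH exprS ev_mul.
Qed.


Lemma tpow_scale (c : R) n : tpow k (tscale c z) n = fun w => c ^+ n * tpow k z n w.
Proof.
elim: n => [|n IH].
  by apply: functional_extensionality => w; rewrite /= mul1r.
rewrite tpowS IH /tscale tmulZl tmulZr; apply: functional_extensionality => w.
by rewrite exprS mulrA.
Qed.

Definition Ep (c : R) : {poly R} := \poly_(i < k.+1) (c ^+ i / (i`!)%:R).

Lemma texp_ev (c : R) : texp k (tscale c z) = ev (Ep c).
Proof.
apply: functional_extensionality => w; rewrite /texp /ev; apply: eq_bigr => i _.
by rewrite tpow_scale coef_poly ltn_ord mulrAC.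
Qed.

Lemma tsub_ev p : tsub (@tone R d) (ev p) = ev (1 - p).
Proof. by rewrite evB ev1. Qed.

Lemma tsub_ev' p : tsub (ev p) (@tone R d) = ev (p - 1).
Proof. by rewrite evB ev1. Qed.

Lemma tinv_ev p : tinv k (ev p) = ev (\sum_(l < k.+1) (1 - p) ^+ l).
Proof.
rewrite ev_sum; apply: functional_extensionality => w; rewrite /tinv.
by apply: eq_bigr => l _; rewrite tsub_ev ev_pow.
Qed.

Definition Lg p : {poly R} :=
  \sum_(l < k.+1 | (0 < l)%N) ((-1) ^+ l.+1 / (l%:R)) *: (p - 1) ^+ l.

Lemma tlog_ev p : tlog k (ev p) = ev (Lg p).
Proof.
rewrite /Lg ev_sum; apply: functional_extensionality => w; rewrite /tlog.
by apply: eq_bigr => l _; rewrite tsub_ev' ev_pow evZ.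
Qed.

Lemma ev_scaleX (c : R) : ev (c *: 'X) = tscale c z.
Proof. by rewrite evZ evX. Qed.

End Ev.

Section Poly.
Implicit Types p q f g : {poly R}.

Definition lowz n p := forall i, (i < n)%N -> p`_i = 0.

Lemma lowzD n p q : lowz n p -> lowz n q -> lowz n (p + q).
Proof. by move=> hp hq i hi; rewrite coefD hp ?hq ?addr0. Qed.

Lemma lowzN n p : lowz n p -> lowz n (- p).
Proof. by move=> hp i hi; rewrite coefN hp ?oppr0. Qed.

Lemma lowzB n p q : lowz n p -> lowz n q -> lowz n (p - q).
Proof. by move=> hp hq; apply: lowzD => //; apply: lowzN. Qed.

Lemma lowzMl n p q : lowz n p -> lowz n (p * q).
Proof.
move=> hp i hi; rewrite coefM big1 // => j _; rewrite hp ?mul0r //.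
by have := ltn_ord j; lia.
Qed.

Lemma lowzMr n p q : lowz n p -> lowz n (q * p).
Proof. by rewrite mulrC; apply: lowzMl. Qed.

Lemma lowzMM n m p q : lowz n p -> lowz m q -> lowz (n + m) (p * q).
Proof.
move=> hp hq i hi; rewrite coefM big1 // => j _.
case: (ltnP j n) => hj; first by rewrite hp ?mul0r.
by rewrite hq ?mulr0 //; have := ltn_ord j; lia.
Qed.

Lemma lowz_pow n f : lowz 1 f -> lowz n (f ^+ n).
Proof.
move=> hf; elim: n => [|n IH]; first by move=> i.
by rewrite exprS -add1n; apply: lowzMM.
Qed.

Lemma lowz_mono n m p : (m <= n)%N -> lowz n p -> lowz m p.
Proof. by move=> hmn hp i hi; apply: hp; lia. Qed.

Lemma lowz_sum n (I : finType) (P : pred I) (F : I -> {poly R}) :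
  (forall i, P i -> lowz n (F i)) -> lowz n (\sum_(i | P i) F i).
Proof.
move=> h i hi; rewrite coef_sum big1 // => j hj; exact: h.
Qed.

Lemma lowz0 n : lowz n 0.
Proof. by move=> i _; rewrite coef0. Qed.

Lemma lowz_ode n (c : R) p :
  p`_0 = 0 -> lowz n (p^`() - c%:P * p) -> lowz n.+1 p.
Proof.
move=> p0 h i; elim: i => [//|i IH] hi.
have := h i (ltnSE hi); rewrite coefB coef_deriv coefCM IH ?mulr0 ?subr0; last by lia.
by move/eqP; rewrite mulrn_eq0 /= => /eqP.
Qed.

Lemma lowz_deriv n p : lowz n.+1 p -> lowz n p^`().
Proof. by move=> h i hi; rewrite coef_deriv h ?mul0rn. Qed.

Lemma Ep0 (c : R) : (Ep c)`_0 = 1.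
Proof. by rewrite coef_poly /= expr0 mul1r invr1. Qed.

Lemma Ep_deriv (c : R) : lowz k ((Ep c)^`() - c%:P * Ep c).
Proof.
move=> i hi; rewrite coefB coef_deriv coefCM !coef_poly ifT; last by lia.
rewrite ifT; last by lia.
rewrite factS natrM exprS -[X in X - _]mulr_natr.
have h1 : (i.+1%:R : R) != 0 by rewrite pnatr_eq0.
have h2 : ((i`!)%:R : R) != 0 by rewrite pnatr_eq0 -lt0n fact_gt0.
field; by rewrite h2 addrC natr1 h1.
Qed.

Lemma EpM (a b : R) : lowz k.+1 (Ep a * Ep b - Ep (a + b)).
Proof.
apply: (lowz_ode (c := a + b)).
  by rewrite coefB coefM big_ord1 !Ep0 mulr1 subrr.
rewrite derivB derivM.
have -> : (Ep a)^`() * Ep b + Ep a * (Ep b)^`() - (Ep (a + b))^`() -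
    (a + b)%:P * (Ep a * Ep b - Ep (a + b)) =
    ((Ep a)^`() - a%:P * Ep a) * Ep b + Ep a * ((Ep b)^`() - b%:P * Ep b)
    - ((Ep (a + b))^`() - (a + b)%:P * Ep (a + b)).
  rewrite polyCD; ring.
by apply: lowzB; [apply: lowzD; [apply: lowzMl | apply: lowzMr]|]; apply: Ep_deriv.
Qed.

Lemma Ep_zero : lowz k.+1 (Ep 0 - 1).
Proof.
move=> i hi; rewrite coefB coef_poly hi coef1.
by case: i hi => [|i] _ /=; rewrite ?expr0 ?invr1 ?mulr1 ?subrr // expr0n /= mul0r subr0.
Qed.

Lemma EpN (c : R) : lowz k.+1 (1 - Ep c * Ep (- c)).
Proof.
have -> : 1 - Ep c * Ep (- c) = - (Ep c * Ep (- c) - Ep (c + - c)) - (Ep (c + - c) - 1).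
  ring.
by apply: lowzB; [apply: lowzN; apply: EpM | rewrite subrr; apply: Ep_zero].
Qed.

Definition Iv p := \sum_(l < k.+1) (1 - p) ^+ l.

Lemma Iv_mul p : p`_0 = 1 -> lowz k.+1 (p * Iv p - 1).
Proof.
move=> p0.
have := subrXX 1 (1 - p) k.+1; rewrite expr1n.
under eq_bigr => i _ do rewrite expr1n mul1r.
rewrite -/(Iv p) (_ : 1 - (1 - p) = p); last by ring.
move=> <-; rewrite (_ : 1 - (1 - p) ^+ k.+1 - 1 = - (1 - p) ^+ k.+1); last by ring.
apply: lowzN; apply: lowz_pow => i; rewrite ltnS leqn0 => /eqP ->.
by rewrite coefB coef1 p0 subrr.
Qed.

Lemma Iv_Ep (c : R) : lowz k.+1 (Iv (Ep c) - Ep (- c)).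
Proof.
have -> : Iv (Ep c) - Ep (- c) =
  Iv (Ep c) * (1 - Ep c * Ep (- c)) + Ep (- c) * (Ep c * Iv (Ep c) - 1) by ring.
by apply: lowzD; apply: lowzMr; [apply: EpN | apply: Iv_mul; apply: Ep0].
Qed.

Lemma Ep_pow n : lowz k.+1 ((Ep 1) ^+ n - Ep n%:R).
Proof.
elim: n => [|n IH]; first by rewrite expr0 -[_ - _]opprB; apply/lowzN/Ep_zero.
have -> : (n.+1%:R : R) = 1 + n%:R by rewrite -natr1 addrC.
have -> : Ep 1 ^+ n.+1 - Ep (1 + n%:R) =
   Ep 1 * (Ep 1 ^+ n - Ep n%:R) + (Ep 1 * Ep n%:R - Ep (1 + n%:R)).
  by rewrite exprS; ring.
by apply: lowzD; [apply: lowzMr | apply: EpM].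
Qed.

Lemma Lg_Ep (c : R) : lowz k.+1 (Lg (Ep c) - c *: 'X).
Proof.
set E := Ep c; set f := E - 1.
have f0 : lowz 1 f by move=> i; rewrite ltnS leqn0 => /eqP ->; rewrite coefB coef1 Ep0 subrr.
apply: (lowz_ode (c := 0)).
  rewrite coefB coefZ coefX mulr0 subr0 /Lg coef_sum big1 // => l hl.
  rewrite coefZ -/f (lowz_pow f0) ?mulr0 //.
rewrite mul0r subr0 derivB derivZ derivX /Lg raddf_sum /=.
set S := \sum_(m < k) (- f) ^+ m.
have hS : \sum_(l < k.+1 | (0 < l)%N) ((-1) ^+ l.+1 / l%:R *: (E - 1) ^+ l)^`() = f^`() * S.
  rewrite big_mkcond big_ord_recl /= add0r /S mulr_sumr; apply: eq_bigr => m _.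
  rewrite derivZ deriv_exp -/f /= -scaler_nat scalerA.
  rewrite (_ : (-1) ^+ (bump 0 m).+1 / (bump 0 m)%:R * (bump 0 m)%:R = (-1) ^+ m).
    by rewrite -scaleN1r exprZn scalerAr.
  rewrite /bump /= add1n mulfVK ?pnatr_eq0 // !exprS !mulN1r opprK //.
rewrite hS.
have hf' : f^`() = E^`() by rewrite /f derivB -polyC1 derivC subr0.
have -> : f^`() * S - c *: 1 = (E^`() - c%:P * E) * S + c%:P * (E * S - 1).
  by rewrite hf' -mul_polyC mulr1; ring.
apply: lowzD; first by apply: lowzMl; apply: Ep_deriv.
apply: lowzMr.
have := subrXX 1 (- f) k; rewrite expr1n.
under eq_bigr => i _ do rewrite expr1n mul1r.
rewrite -/S (_ : 1 - - f = E); last by rewrite /f; ring.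
move=> <-; rewrite (_ : 1 - (- f) ^+ k - 1 = - (- f) ^+ k); last by ring.
apply: lowzN; apply: lowz_pow; exact: lowzN.
Qed.

End Poly.

Section Pert.
Variables (j : nat).
Hypotheses (j0 : (0 < j)%N) (jk : (j <= k)%N).

Definition agr a b := forall w, (size w < j)%N -> a w = b w.

Lemma mul_pert_r a b b' w : agr b b' -> (size w <= j)%N ->
  tmul k a b' w - tmul k a b w = a [::] * (b' w - b w).
Proof.
move=> hb hw; have hwk : (size w <= k)%N by lia.
rewrite /tmul hwk.
rewrite -sumrB big_ord_recl /= take0 drop0 -mulrBr big1 ?addr0 // => i _.
rewrite hb ?subrr ?mulr0 // size_drop /bump /=; have := ltn_ord i; lia.
Qed.

Lemma mul_pert_l a a' b w : agr a a' -> (size w <= j)%N ->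
  tmul k a' b w - tmul k a b w = (a' w - a w) * b [::].
Proof.
move=> ha hw; have hwk : (size w <= k)%N by lia.
rewrite /tmul hwk.
rewrite -sumrB big_ord_recr /= take_size drop_size -mulrBl big1 ?add0r // => i _.
rewrite ha ?subrr ?mul0r // size_takel /=; have := ltn_ord i; lia.
Qed.

Lemma mul_pert a a' b b' w : agr a a' -> agr b b' -> (size w <= j)%N ->
  tmul k a' b' w - tmul k a b w = a' [::] * (b' w - b w) + (a' w - a w) * b [::].
Proof.
move=> ha hb hw.
rewrite -(mul_pert_r a' hb hw) -(mul_pert_l b ha hw); ring.
Qed.

Lemma agr_mul a a' b b' : agr a a' -> agr b b' -> agr (tmul k a b) (tmul k a' b').
Proof.
move=> ha hb w hw; apply/eqP; rewrite eq_sym -subr_eq0 (mul_pert ha hb); last by lia.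
by rewrite ha // hb // !subrr mulr0 mul0r addr0.
Qed.

Lemma pow_pert a a' : a [::] = 0 -> agr a a' -> forall l,
  agr (tpow k a l) (tpow k a' l) /\
  forall w, (size w <= j)%N -> tpow k a' l w - tpow k a l w = (l == 1)%:R * (a' w - a w).
Proof.
move=> a0 ha; elim => [|l [IH1 IH2]].
  by split => // w _; rewrite subrr mul0r.
split; first exact: agr_mul.
move=> w hw; rewrite !tpowS (mul_pert ha IH1 hw) IH2 // tpow_nil -ha ?size_nil //.
by rewrite a0 mul0r add0r expr0n /=; case: l {IH1 IH2} => [|l] /=; rewrite ?mulr1 ?mul1r ?mulr0 ?mul0r.
Qed.

Lemma sum_1 (P : pred nat) (F : nat -> R) : P 1%N ->
  \sum_(l < k.+1 | P l) (nat_of_ord l == 1%N)%:R * F l = F 1%N.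
Proof.
move=> P1; have hk' : (1 < k.+1)%N by rewrite ltnS; lia.
rewrite (bigD1 (Ordinal hk')) //= mul1r big1 ?addr0 // => i /andP [_ hi].
have /negbTE -> : (nat_of_ord i != 1%N).
  by apply: contra hi => /eqP hi; apply/eqP/val_inj.
by rewrite mul0r.
Qed.

Lemma inv_pert m m' : m [::] = 1 -> agr m m' ->
  agr (tinv k m) (tinv k m') /\
  forall w, (size w <= j)%N -> tinv k m' w - tinv k m w = - (m' w - m w).
Proof.
move=> m1 hm.
have ha : agr (tsub (@tone R d) m) (tsub (@tone R d) m') by move=> w hw; rewrite /tsub hm.
have a0 : tsub (@tone R d) m [::] = 0 by rewrite /tsub m1 /tone eqxx subrr.
have hp := pow_pert a0 ha.
split.
  move=> w hw; rewrite /tinv; apply: eq_bigr => l _; by rewrite (proj1 (hp l)).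
move=> w hw; rewrite /tinv -sumrB.
under eq_bigr => l _ do rewrite (proj2 (hp l)) //.
rewrite (@sum_1 (fun _ => true) (fun _ => tsub (@tone R d) m' w - tsub (@tone R d) m w)) //.
rewrite /tsub; ring.
Qed.

Lemma log_pert s s' : s [::] = 1 -> agr s s' ->
  forall w, (size w <= j)%N -> tlog k s' w - tlog k s w = s' w - s w.
Proof.
move=> s1 hs.
have ha : agr (tsub s (@tone R d)) (tsub s' (@tone R d)) by move=> w hw; rewrite /tsub hs.
have a0 : tsub s (@tone R d) [::] = 0 by rewrite /tsub s1 /tone eqxx subrr.
have hp := pow_pert a0 ha.
move=> w hw; rewrite /tlog -sumrB.
under eq_bigr => l _ do rewrite -mulrBr (proj2 (hp l)) // mulrCA.
rewrite (@sum_1 (fun l => (0 < l)%N) (fun l => (-1) ^+ l.+1 / l%:R * (tsub s' (@tone R d) w - tsub s (@tone R d) w))) //.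
rewrite /tsub expr2 mulN1r opprK invr1 mulr1 mul1r; ring.
Qed.

End Pert.

End T.

Section Main.
Variables (R : realType) (d k : nat).
Local Notation tens := (Defs.tens R d).

Lemma tinv_nil (m : tens) : m [::] = 1 -> tinv k m [::] = 1.
Proof.
move=> m1; rewrite /tinv.
under eq_bigr do rewrite tpow_nil /tsub /tone eqxx m1 subrr.
rewrite big_ord_recl expr0 big1 ?addr0 // => i _; by rewrite expr0n.
Qed.

Definition Fb N (g : 'I_N -> tens) (m : tens) :=
  (fun w => \sum_(i < N) tlog k (tmul k (tinv k m) (g i)) w).

Lemma bary_uniq N (g : 'I_N -> tens) (m m' : tens) : (0 < N)%N ->
  m [::] = 1 -> m' [::] = 1 -> tr k m -> tr k m' -> (forall i, g i [::] = 1) ->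
  Fb g m = @tzero R d -> Fb g m' = @tzero R d -> m = m'.
Proof.
move=> N0 m1 m1' trm trm' g1 F F'.
suff H : forall n, agr n m m'.
  apply: functional_extensionality => w; exact: (H (size w).+1).
elim => [|n IH] w hw; first by [].
case: (ltnP (size w) n) => hwn; first exact: IH.
have ew : size w = n by lia.
case: (posnP n) => n0.
  by move: ew; rewrite n0 => /size0nil ->; rewrite m1 m1'.
case: (ltnP k n) => nk.
  by rewrite trm ?trm' //; lia.
have [hi1 hi2] := inv_pert n0 nk m1 IH.
have key : forall i, tlog k (tmul k (tinv k m') (g i)) w -
    tlog k (tmul k (tinv k m) (g i)) w = - (m' w - m w).
  move=> i.
  have hg : agr n (g i) (g i) by [].
  have hs := agr_mul n0 nk hi1 hg.
  rewrite (log_pert n0 nk _ hs); last by rewrite ew.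
    rewrite (mul_pert n0 nk hi1 hg); last by rewrite ew.
    by rewrite subrr mulr0 add0r hi2 ?ew // g1 mulr1.
  by rewrite tmul_nil tinv_nil // g1 mulr1.
have e := congr1 (fun f => f w) F; have e' := congr1 (fun f => f w) F'.
rewrite /Fb /tzero /= in e e'.
have : \sum_(i < N) (tlog k (tmul k (tinv k m') (g i)) w -
    tlog k (tmul k (tinv k m) (g i)) w) = 0 by rewrite sumrB e e' subrr.
under eq_bigr do rewrite key.
rewrite sumr_const card_ord => /eqP; rewrite mulrn_eq0 eqn0Ngt N0 /= oppr_eq0 subr_eq0.
by move/eqP.
Qed.

End Main.

Lemma ev_lowz (R : realType) d k (z : Defs.tens R d) p q :
  lowz k.+1 (p - q) -> ev k z p = ev k z q.
Proof.
move=> h; apply: ev_eq => i hi; apply/eqP; rewrite -subr_eq0 -coefB; apply/eqP; exact: h.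
Qed.

Lemma texp_nil (R : realType) d k (y : Defs.tens R d) : y [::] = 0 -> texp k y [::] = 1.
Proof.
move=> y0; rewrite /texp.
under eq_bigr do rewrite tpow_nil y0.
rewrite big_ord_recl expr0 /= invr1 mulr1 big1 ?addr0 // => i _; by rewrite expr0n mul0r.
Qed.

Lemma texp_tr (R : realType) d k (y : Defs.tens R d) : tr k (texp k y).
Proof. by move=> w hw; rewrite /texp big1 // => i _; rewrite tr_tpow // mul0r. Qed.

Unset Implicit Arguments.
Theorem proposition4p5 (R : realType) (d k N : nat) (x : tens R d)
    (u : 'I_N -> nat) :
  (0 < N)%N ->
  in_group k x ->
  (N %| \sum_(i < N) u i)%N ->
  bary k (fun i => tpow k x (u i)) = tpow k x ((\sum_(i < N) u i) %/ N)%N.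
Proof.
move=> N0 [z [hz ->]] hdiv.
have [z0 trz] := lie_props hz.
set q := ((\sum_(i < N) u i) %/ N)%N.
have hS : (\sum_(i < N) u i = q * N)%N by rewrite divnK.
set g := fun i => tpow k (texp k z) (u i).
have ez : texp k z = ev k z (Ep k 1).
  rewrite -texp_ev; congr texp; apply: functional_extensionality => w.
  by rewrite /tscale mul1r.
have pw : forall n, tpow k (texp k z) n = ev k z (Ep k n%:R).
  by move=> n; rewrite ez (ev_pow z0 trz); apply: ev_lowz; apply: Ep_pow.
set m0 := tpow k (texp k z) q.
have isb : is_bary k g m0.
  split.
    exists (tscale q%:R z); split; first exact: lie_scale.
    by rewrite /m0 pw texp_ev.
  apply: functional_extensionality => w.
  have hi : forall i, tlog k (tmul k (tinv k m0) (g i)) = tscale (- q%:R + (u i)%:R) z.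
    move=> i; rewrite /g /m0 !pw (tinv_ev z0 trz) -(ev_mul z0 trz).
    rewrite (@ev_lowz _ _ _ _ _ (Ep k (- q%:R + (u i)%:R))); last first.
      have -> : Iv k (Ep k (q%:R : R)) * Ep k (u i)%:R - Ep k (- q%:R + (u i)%:R) =
        (Iv k (Ep k q%:R) - Ep k (- q%:R)) * Ep k (u i)%:R +
        (Ep k (- q%:R) * Ep k (u i)%:R - Ep k (- q%:R + (u i)%:R)) by ring.
      by apply: lowzD; [apply: lowzMl; apply: Iv_Ep | apply: EpM].
    rewrite (tlog_ev z0 trz) -(ev_scaleX z0 trz); apply: ev_lowz; exact: Lg_Ep.
  under eq_bigr do rewrite hi.
  rewrite /tscale -mulr_suml big_split /= sumr_const card_ord -natr_sum hS natrM.
  rewrite /tzero; apply/eqP; rewrite mulf_eq0; apply/orP; left; apply/eqP; ring.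
have uniq : forall m', is_bary k g m' -> m' = m0.
  move=> m' [[y [hy ->]] hF]; symmetry.
  have [y0 _] := lie_props hy.
  apply: (@bary_uniq R d k N g) => //.
  - by rewrite /m0 tpow_nil texp_nil // expr1n.
  - exact: texp_nil.
  - exact: tr_tpow.
  - exact: texp_tr.
  - by move=> i; rewrite /g tpow_nil texp_nil // expr1n.
  - exact: isb.2.
rewrite /bary.
have := @epsilon_spec _ (inhabits (@tzero R d))
  (fun m => is_bary k g m /\ forall m', is_bary k g m' -> m' = m).
case; first by exists m0.
move=> hb _; exact: uniq hb.
Qed.
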